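(* Let $(p_m)$ be a sequence of primes with $p_m\to\infty$, and let $c_m=(c_{m,1},\dots,c_{m,b})\in\mathbb{F}_{p_m}^b$. Assume that for every nonzero rational vector $(\alpha_1,\dots,\alpha_b)$, for almost all $m$ it is not the case that $\sum_{i=1}^b\alpha_ic_{m,i}=0$ in $\mathbb{F}_{p_m}$. Let $U$ be a nonempty open subset of $\mathbb{T}^b$, let $k\in\mathbb{N}$ and $l\in(\mathbb{Z}/k\mathbb{Z})^*$. Then for arbitrarily large $m$ there is $e_m\in\mathbb{N}$ with $e_m\equiv l\pmod k$ and $\Psi_{p_m}(e_mc_m)\in U$.
   Context: $\mathbb{T}=\{z\in\mathbb{C}:|z|=1\}$; $\Psi_p(n+p\mathbb{Z})=\exp(2\pi i n/p)$ is the standard additive character of $\mathbb{F}_p$, applied coordinatewise to tuples. *)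

(* Defs.v *)
From Stdlib Require Import Reals ZArith QArith Znumtheory List.
From Coquelicot Require Import Coquelicot.

Definition Ib (b : nat) : Type := { i : nat | (i < b)%nat }.

Definition torus_pt (b : nat) (z : Ib b -> C) : Prop :=
  forall i : Ib b, Cmod (z i) = 1%R.

Definition open_in_torus (b : nat) (U : (Ib b -> C) -> Prop) : Prop :=
  (forall z, U z -> torus_pt b z) /\
  (forall z, U z -> exists eps : R, (0 < eps)%R /\
     forall w, torus_pt b w -> (forall i, (Cmod (Cminus (w i) (z i)) < eps)%R) -> U w).

Definition Psi (p n : Z) : C :=
  (cos (2 * PI * IZR n / IZR p), sin (2 * PI * IZR n / IZR p)).

Definition zsum (b : nat) (f : nat -> Z) : Z :=
  fold_right Z.add 0%Z (map f (seq 0 b)).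

(* "sum_{i<b} alpha_i c_i = 0 in F_p": every alpha_i (in lowest terms) has a
   denominator invertible mod p, r_i is its image in F_p, and p | sum r_i c_i.
   (When p divides some denominator the expression is undefined; we then count it
   as "not zero". Since p_m -> oo this only concerns finitely many m.) *)
Definition qsum_zero_mod (p : Z) (b : nat) (alpha : nat -> Q) (c : nat -> Z) : Prop :=
  (forall i, (i < b)%nat -> ~ (p | Zpos (Qden (Qred (alpha i))))%Z) /\
  exists r : nat -> Z,
    (forall i, (i < b)%nat ->
       (p | r i * Zpos (Qden (Qred (alpha i))) - Qnum (Qred (alpha i)))%Z) /\
    (p | zsum b (fun i => r i * c i))%Z.

(* Main.v *)
Require Import Defs.
From Stdlib Require Import Reals ZArith QArith Znumtheory List Lra Lia Classical.
From Coquelicot Require Import Coquelicot.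
Open Scope R_scope.

Definition E (x : R) : C := (cos x, sin x).

Lemma E_add x y : E (x + y) = Cmult (E x) (E y).
Proof. unfold E, Cmult; simpl. rewrite cos_plus, sin_plus. f_equal; ring. Qed.

Lemma E_0 : E 0 = RtoC 1.
Proof. unfold E, RtoC. rewrite cos_0, sin_0. reflexivity. Qed.

Lemma E_per x (k : Z) : E (x + 2 * PI * IZR k) = E x.
Proof.
  destruct (Z_le_gt_dec 0 k) as [Hk|Hk].
  - rewrite <- (Z2Nat.id k Hk), <- INR_IZR_INZ. unfold E.
    replace (x + 2 * PI * INR (Z.to_nat k)) with (x + 2 * INR (Z.to_nat k) * PI) by ring.
    rewrite cos_period, sin_period. reflexivity.
  - set (k' := Z.to_nat (- k)).
    assert (IZR k = - INR k') as Hk'.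
    { unfold k'. rewrite INR_IZR_INZ, Z2Nat.id by lia. rewrite opp_IZR. ring. }
    rewrite Hk'. unfold E.
    pose proof (cos_period (x - 2 * PI * INR k') k') as H1.
    pose proof (sin_period (x - 2 * PI * INR k') k') as H2.
    replace (x - 2 * PI * INR k' + 2 * INR k' * PI) with x in H1, H2 by ring.
    replace (x + 2 * PI * - INR k') with (x - 2 * PI * INR k') by ring.
    rewrite H1, H2. reflexivity.
Qed.

Definition csum {A} (l : list A) (f : A -> C) : C :=
  fold_right (fun a acc => Cplus (f a) acc) (RtoC 0) l.
Definition rsum {A} (l : list A) (f : A -> R) : R :=
  fold_right (fun a acc => f a + acc) 0 l.

Lemma csum_nil {A} (f : A -> C) : csum nil f = RtoC 0.
Proof. reflexivity. Qed.
Lemma csum_cons {A} (a : A) l f : csum (a :: l) f = Cplus (f a) (csum l f).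
Proof. reflexivity. Qed.

Lemma csum_app {A} (l1 l2 : list A) f : csum (l1 ++ l2) f = Cplus (csum l1 f) (csum l2 f).
Proof. induction l1; cbn [app]. - rewrite csum_nil. ring. - rewrite !csum_cons, IHl1. ring. Qed.

Lemma csum_ext {A} (l : list A) f g : (forall a, In a l -> f a = g a) -> csum l f = csum l g.
Proof. induction l; intros H. reflexivity. rewrite !csum_cons. rewrite H by (left; auto). f_equal. apply IHl. intros; apply H; right; auto. Qed.

Lemma csum_plus {A} (l : list A) f g : csum l (fun a => Cplus (f a) (g a)) = Cplus (csum l f) (csum l g).
Proof. induction l. rewrite !csum_nil. ring. rewrite !csum_cons, IHl. ring. Qed.

Lemma csum_scal {A} (l : list A) c f : csum l (fun a => Cmult c (f a)) = Cmult c (csum l f).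
Proof. induction l. rewrite !csum_nil. ring. rewrite !csum_cons, IHl. ring. Qed.

Lemma csum_scal_r {A} (l : list A) c f : csum l (fun a => Cmult (f a) c) = Cmult (csum l f) c.
Proof. induction l. rewrite !csum_nil. ring. rewrite !csum_cons, IHl. ring. Qed.

Lemma csum_swap {A B} (l1 : list A) (l2 : list B) (f : A -> B -> C) :
  csum l1 (fun a => csum l2 (fun b => f a b)) = csum l2 (fun b => csum l1 (fun a => f a b)).
Proof.
  induction l1.
  - rewrite csum_nil. induction l2. reflexivity. rewrite csum_cons, <- IHl2, csum_nil. ring.
  - rewrite csum_cons, IHl1, <- csum_plus. apply csum_ext. intros. rewrite csum_cons. reflexivity.
Qed.

Lemma RtoC_plus x y : RtoC (x + y) = Cplus (RtoC x) (RtoC y).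
Proof. unfold RtoC, Cplus; simpl. f_equal; ring. Qed.
Lemma RtoC_mult x y : RtoC (x * y) = Cmult (RtoC x) (RtoC y).
Proof. unfold RtoC, Cmult; simpl. f_equal; ring. Qed.

Lemma csum_RtoC {A} (l : list A) f : csum l (fun a => RtoC (f a)) = RtoC (rsum l f).
Proof. induction l. reflexivity. rewrite csum_cons, IHl. unfold rsum; simpl. rewrite RtoC_plus. reflexivity. Qed.

Lemma csum_const {A} (l : list A) c : csum l (fun _ => c) = Cmult (RtoC (INR (length l))) c.
Proof. induction l. rewrite csum_nil. simpl length. rewrite INR_0. ring. rewrite csum_cons, IHl. simpl length. rewrite S_INR, RtoC_plus. ring. Qed.

Lemma rsum_nonneg {A} (l : list A) f : (forall a, In a l -> 0 <= f a) -> 0 <= rsum l f.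
Proof. induction l; simpl; intros; [lra|]. pose proof (H a (or_introl eq_refl)). assert (0 <= rsum l f) by (apply IHl; auto). unfold rsum in *; simpl. lra. Qed.

Lemma rsum_le {A} (l : list A) f g : (forall a, In a l -> f a <= g a) -> rsum l f <= rsum l g.
Proof. induction l; simpl; intros; unfold rsum in *; simpl; [lra|]. pose proof (H a (or_introl eq_refl)). assert (fold_right (fun a0 acc => f a0 + acc) 0 l <= fold_right (fun a0 acc => g a0 + acc) 0 l) by (apply IHl; auto). lra. Qed.

Lemma rsum_const {A} (l : list A) c : rsum l (fun _ => c) = INR (length l) * c.
Proof. induction l. simpl. ring. cbn [length]. rewrite S_INR. unfold rsum in *; cbn [fold_right]. rewrite IHl. ring. Qed.
Lemma E_eq_1 th : E th = RtoC 1 -> exists k : Z, th = 2 * PI * IZR k.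
Proof.
  intros H. unfold E, RtoC in H. injection H as H1 H2.
  pose proof (cos_2a_sin (th/2)) as Hc. replace (2 * (th/2)) with th in Hc by field.
  assert (sin (th/2) = 0) as Hs by nra.
  destruct (sin_eq_0_0 _ Hs) as [k Hk]. exists k. lra.
Qed.

Lemma geom n th ph :
  Cmult (Cminus (E th) (RtoC 1)) (csum (seq 0 n) (fun j => E (INR j * th + ph)))
  = Cminus (E (INR n * th + ph)) (E ph).
Proof.
  induction n.
  - simpl seq. rewrite csum_nil. simpl INR. replace (0 * th + ph) with ph by ring. ring.
  - rewrite seq_S, csum_app, csum_cons, csum_nil. simpl (0 + n)%nat.
    replace (INR (S n) * th + ph) with ((INR n * th + ph) + th) by (rewrite S_INR; ring).
    rewrite (E_add (INR n * th + ph) th).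
    transitivity (Cplus (Cmult (Cminus (E th) (RtoC 1)) (csum (seq 0 n) (fun j => E (INR j * th + ph))))
       (Cmult (Cminus (E th) (RtoC 1)) (E (INR n * th + ph)))). ring.
    rewrite IHn. ring.
Qed.

Lemma Cmult_eq0 (x y : C) : x <> RtoC 0 -> Cmult x y = RtoC 0 -> y = RtoC 0.
Proof.
  intros Hx H. replace y with (Cmult (Cinv x) (Cmult x y)) by (field; auto).
  rewrite H. ring.
Qed.

Lemma G (M : nat) (u : Z) ph : (0 < M)%nat -> ~ (Z.of_nat M | u)%Z ->
  csum (seq 0 M) (fun j => E (INR j * (2 * PI * IZR u / INR M) + ph)) = RtoC 0.
Proof.
  intros HM Hu. apply (Cmult_eq0 (Cminus (E (2 * PI * IZR u / INR M)) (RtoC 1))).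
  - intros H. apply Hu.
    assert (E (2 * PI * IZR u / INR M) = RtoC 1) as H1.
    { replace (E (2 * PI * IZR u / INR M)) with (Cplus (Cminus (E (2 * PI * IZR u / INR M)) (RtoC 1)) (RtoC 1)) by ring.
      rewrite H. ring. }
    destruct (E_eq_1 _ H1) as [k Hk]. exists k.
    assert (INR M <> 0) by (apply not_0_INR; lia).
    assert (IZR u = IZR k * INR M).
    { apply (Rmult_eq_reg_l (2 * PI)). 2: pose proof PI_RGT_0; lra.
      replace (2*PI*IZR u) with ((2*PI*IZR u/INR M)*INR M) by (field; auto).
      rewrite Hk. ring. }
    rewrite INR_IZR_INZ, <- mult_IZR in H2. apply eq_IZR in H2. lia.
  - rewrite geom.
    replace (INR M * (2 * PI * IZR u / INR M) + ph) with (ph + 2 * PI * IZR u).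
    rewrite E_per. ring.
    field. apply not_0_INR; lia.
Qed.
Definition step (t : R * Z) : list (R * Z) :=
  (fst t, snd t) :: (fst t / 2, (snd t + 1)%Z) :: (fst t / 2, (snd t - 1)%Z) :: nil.
Fixpoint L (N : nat) : list (R * Z) :=
  match N with O => (1, 0%Z) :: nil | S N' => flat_map step (L N') end.
Definition K (N : nat) (y : R) : R := (1 + cos y) ^ N.
Definition term (t : R * Z) (y : R) : C := Cmult (RtoC (fst t)) (E (IZR (snd t) * y)).

Lemma csum_flat_map {A B} (g : A -> list B) l f :
  csum (flat_map g l) f = csum l (fun a => csum (g a) f).
Proof. induction l. reflexivity. simpl flat_map. rewrite csum_app, csum_cons, IHl. reflexivity. Qed.

Lemma step_expand t y : csum (step t) (fun s => term s y) = Cmult (RtoC (1 + cos y)) (term t y).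
Proof.
  destruct t as [w n]. unfold step, term. rewrite !csum_cons, csum_nil. simpl fst; simpl snd.
  rewrite plus_IZR, minus_IZR.
  replace ((IZR n + 1) * y) with (IZR n * y + y) by ring.
  replace ((IZR n - 1) * y) with (IZR n * y + - y) by ring.
  rewrite !E_add. unfold E, RtoC, Cmult, Cplus; simpl. rewrite cos_neg, sin_neg.
  f_equal; field.
Qed.

Lemma L_expand N y : RtoC (K N y) = csum (L N) (fun t => term t y).
Proof.
  induction N.
  - unfold K, L. rewrite csum_cons, csum_nil. unfold term; simpl fst; simpl snd. rewrite Rmult_0_l, E_0. simpl pow. ring.
  - simpl L. rewrite csum_flat_map. unfold K; simpl pow. rewrite RtoC_mult. fold (K N y).
    rewrite IHN, <- csum_scal. apply csum_ext. intros. rewrite step_expand. reflexivity.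
Qed.

Lemma L_bound N t : In t (L N) -> (Z.abs (snd t) <= Z.of_nat N)%Z.
Proof.
  revert t; induction N; intros t H.
  - simpl in H. destruct H as [H|[]]. subst. simpl. lia.
  - simpl in H. apply in_flat_map in H. destruct H as [s [Hs Ht]].
    specialize (IHN s Hs). unfold step in Ht. simpl in Ht.
    destruct Ht as [H|[H|[H|[]]]]; subst; simpl; lia.
Qed.

Definition q0 (N : nat) : R := rsum (L N) (fun t => if Z.eqb (snd t) 0 then fst t else 0).

Lemma csum_select (l : list (R * Z)) X :
  csum l (fun t => Cmult (RtoC (fst t)) (if Z.eqb (snd t) 0 then X else RtoC 0))
  = Cmult (RtoC (rsum l (fun t => if Z.eqb (snd t) 0 then fst t else 0))) X.
Proof.
  induction l. rewrite csum_nil. unfold rsum; simpl. ring.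
  rewrite csum_cons, IHl. unfold rsum; simpl. fold (rsum l (fun t => if Z.eqb (snd t) 0 then fst t else 0)).
  destruct (Z.eqb (snd a) 0); rewrite RtoC_plus; ring.
Qed.

Lemma K_nonneg N y : 0 <= K N y.
Proof. unfold K. apply pow_le. pose proof (COS_bound y). lra. Qed.

Lemma K_le N y : K N y <= 2 ^ N.
Proof. unfold K. apply pow_incr. pose proof (COS_bound y). lra. Qed.

Lemma RtoC_inj x y : RtoC x = RtoC y -> x = y.
Proof. intros H. apply (f_equal fst) in H. exact H. Qed.

Lemma q0_lower N : 2 ^ N <= INR (2 * N + 1) * q0 N.
Proof.
  set (M := (2 * N + 1)%nat).
  set (y := fun t : nat => INR t * (2 * PI / INR M)).
  assert (HM : INR M <> 0) by (apply not_0_INR; unfold M; lia).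
  assert (Hsum : RtoC (rsum (seq 0 M) (fun t => K N (y t))) = Cmult (RtoC (q0 N)) (RtoC (INR M))).
  { rewrite <- csum_RtoC.
    rewrite (csum_ext _ _ (fun t => csum (L N) (fun s => term s (y t)))) by (intros; apply L_expand).
    rewrite csum_swap. unfold q0. rewrite <- csum_select. apply csum_ext.
    intros [w n] Hin. unfold term. simpl fst; simpl snd. rewrite csum_scal. f_equal.
    destruct (Z.eqb_spec n 0) as [Hn|Hn].
    - subst n. rewrite (csum_ext _ _ (fun _ => RtoC 1)).
      + rewrite csum_const, length_seq. ring.
      + intros. rewrite Rmult_0_l, E_0. reflexivity.
    - rewrite (csum_ext _ _ (fun j => E (INR j * (2 * PI * IZR n / INR M) + 0))).
      + apply G. unfold M; lia.
        intros [q Hq]. pose proof (L_bound _ _ Hin) as Hb. simpl in Hb. unfold M in Hq. rewrite Nat2Z.inj_add, Nat2Z.inj_mul in Hq. assert (q = 0 \/ q >= 1 \/ q <= -1)%Z as Hc by lia. destruct Hc as [Hc|[Hc|Hc]]; nia.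
      + intros. f_equal. unfold y. field. auto. }
  rewrite <- RtoC_mult in Hsum. apply RtoC_inj in Hsum.
  rewrite Rmult_comm, <- Hsum.
  unfold M. replace (2 * N + 1)%nat with (S (2 * N)) by lia. cbn [seq]. unfold rsum; cbn [fold_right].
  fold (rsum (seq 1 (2 * N)) (fun t => K N (y t))).
  assert (0 <= rsum (seq 1 (2 * N)) (fun t => K N (y t))) by (apply rsum_nonneg; intros; apply K_nonneg).
  assert (K N (y 0%nat) = 2 ^ N). { unfold K, y. simpl INR. rewrite Rmult_0_l, cos_0. f_equal. }

  lra.
Qed.
Definition yv (p : Z) (c : nat -> Z) (a : nat -> R) (i e : nat) : R :=
  2 * PI * IZR (Z.of_nat e * c i) / IZR p - a i.
Definition prodC N p c a (I : list nat) (e : nat) : C :=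
  fold_right (fun i acc => Cmult (RtoC (K N (yv p c a i e))) acc) (RtoC 1) I.
Definition prodR N p c a (I : list nat) (e : nat) : R :=
  fold_right (fun i acc => K N (yv p c a i e) * acc) 1 I.
Definition zs (c : nat -> Z) (I : list nat) (v : nat -> Z) : Z :=
  fold_right Z.add 0%Z (map (fun i => (v i * c i)%Z) I).
Definition ee (l' k j : nat) : nat := (l' + k * j)%nat.
Definition Achar (p : Z) (l' k : nat) (s : Z) (ph : R) (j : nat) : C :=
  E (2 * PI * IZR (Z.of_nat (ee l' k j) * s) / IZR p + ph).
Definition A N p l' k c a s ph I : C :=
  csum (seq 0 (Z.to_nat p)) (fun j => Cmult (Achar p l' k s ph j) (prodC N p c a I (ee l' k j))).

Lemma prodC_R N p c a I e : prodC N p c a I e = RtoC (prodR N p c a I e).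
Proof. induction I; simpl; auto. unfold prodC in *; simpl. rewrite IHI, RtoC_mult. reflexivity. Qed.

Lemma IZR_p_pos p : prime p -> IZR p = INR (Z.to_nat p) /\ (0 < Z.to_nat p)%nat.
Proof. intros Hp. pose proof (prime_ge_2 _ Hp). split. rewrite INR_IZR_INZ, Z2Nat.id by lia. reflexivity. lia. Qed.

Lemma base_sum p l' k s ph : prime p -> ~ (p | Z.of_nat k)%Z ->
  csum (seq 0 (Z.to_nat p)) (fun j => Achar p l' k s ph j) =
  if Zdivide_dec p s then Cmult (RtoC (INR (Z.to_nat p))) (E ph) else RtoC 0.
Proof.
  intros Hp Hk. destruct (IZR_p_pos p Hp) as [HP HP0]. pose proof (prime_ge_2 _ Hp).
  assert (IZR p <> 0) by (apply not_0_IZR; lia).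
  destruct (Zdivide_dec p s) as [[t Ht]|Hs].
  - rewrite (csum_ext _ _ (fun _ => E ph)). rewrite csum_const, length_seq. reflexivity.
    intros j _. unfold Achar. subst s.
    replace (2 * PI * IZR (Z.of_nat (ee l' k j) * (t * p)) / IZR p + ph)
      with (ph + 2 * PI * IZR (Z.of_nat (ee l' k j) * t)).
    apply E_per. rewrite !mult_IZR. field. auto.
  - rewrite (csum_ext _ _ (fun j => E (INR j * (2 * PI * IZR (Z.of_nat k * s) / INR (Z.to_nat p))
          + (2 * PI * IZR (Z.of_nat l' * s) / IZR p + ph)))).
    + apply G. auto. rewrite Z2Nat.id by lia. intros Hd. apply prime_mult in Hd; auto. tauto.
    + intros j _. unfold Achar, ee. f_equal. rewrite <- HP.
      rewrite Nat2Z.inj_add, Nat2Z.inj_mul, !mult_IZR, plus_IZR, mult_IZR, INR_IZR_INZ. field. auto.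
Qed.

Definition Hgood N p c (s : Z) (I : list nat) : Prop :=
  forall v : nat -> Z, (forall i, In i I -> (Z.abs (v i) <= Z.of_nat N)%Z) ->
    (p | s + zs c I v)%Z -> forall i, In i I -> v i = 0%Z.

Lemma zs_ext c I v w : (forall i, In i I -> v i = w i) -> zs c I v = zs c I w.
Proof. intros H. unfold zs. f_equal. apply map_ext_in. intros. rewrite H; auto. Qed.

Lemma Achar_mult p l' k s ph c a i n j : IZR p <> 0 ->
  Cmult (Achar p l' k s ph j) (E (IZR n * yv p c a i (ee l' k j)))
  = Achar p l' k (s + n * c i) (ph - IZR n * a i) j.
Proof.
  intros Hp. unfold Achar, yv. rewrite <- E_add. f_equal.
  rewrite Z.mul_add_distr_l, plus_IZR, !mult_IZR. field. auto.
Qed.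

Lemma A_main N p l' k c a I : prime p -> ~ (p | Z.of_nat k)%Z -> NoDup I ->
  forall s ph, Hgood N p c s I ->
  A N p l' k c a s ph I =
  if Zdivide_dec p s then Cmult (Cmult (RtoC (INR (Z.to_nat p))) (E ph)) (RtoC (q0 N ^ length I))
  else RtoC 0.
Proof.
  intros Hp Hk HI. pose proof (prime_ge_2 _ Hp).
  assert (Hp0 : IZR p <> 0) by (apply not_0_IZR; lia).
  induction HI as [|i I Hni HI IH]; intros s ph Hg.
  - unfold A. simpl prodC. rewrite csum_scal_r, base_sum by auto. simpl pow.
    destruct (Zdivide_dec p s); ring.
  - assert (Hstep : A N p l' k c a s ph (i :: I) =
      csum (L N) (fun t => Cmult (RtoC (fst t)) (A N p l' k c a (s + snd t * c i) (ph - IZR (snd t) * a i) I))).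
    { unfold A. rewrite (csum_ext _ _ (fun j => csum (L N) (fun t => Cmult (RtoC (fst t))
          (Cmult (Achar p l' k (s + snd t * c i) (ph - IZR (snd t) * a i) j) (prodC N p c a I (ee l' k j)))))).
      - rewrite csum_swap. apply csum_ext. intros. rewrite csum_scal. reflexivity.
      - intros j _. unfold prodC at 1. cbn [fold_right]. fold (prodC N p c a I (ee l' k j)).
        rewrite L_expand. rewrite <- csum_scal_r, <- csum_scal. apply csum_ext.
        intros t _. unfold term. rewrite <- Achar_mult by auto. ring. }
    rewrite Hstep.
    rewrite (csum_ext _ _ (fun t => Cmult (RtoC (fst t)) (if Z.eqb (snd t) 0 then
        (if Zdivide_dec p s then Cmult (Cmult (RtoC (INR (Z.to_nat p))) (E ph)) (RtoC (q0 N ^ length I)) else RtoC 0)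
        else RtoC 0))).
    + rewrite csum_select. fold (q0 N). simpl length. destruct (Zdivide_dec p s).
      * simpl pow. rewrite RtoC_mult. ring.
      * ring.
    + intros [w n] Hin. simpl fst; simpl snd. f_equal.
      pose proof (L_bound _ _ Hin) as Hb. simpl snd in Hb.
      rewrite IH.
      2:{ intros v Hv Hd x Hx.
          set (v' := fun y => if Nat.eqb y i then n else v y).
          assert (Hzs : zs c I v' = zs c I v).
          { apply zs_ext. intros y Hy. unfold v'. destruct (Nat.eqb_spec y i); auto. subst; contradiction. }
          assert (v' x = 0%Z).
          { apply (Hg v').
            - intros y Hy. unfold v'. destruct (Nat.eqb_spec y i). lia.
              destruct Hy as [Hy|Hy]. subst; contradiction. apply Hv; auto.
            - unfold zs; simpl. fold (zs c I v'). rewrite Hzs. unfold v'. rewrite Nat.eqb_refl.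
              replace (s + (n * c i + zs c I v))%Z with (s + n * c i + zs c I v)%Z by ring. auto.
            - right; auto. }
          unfold v' in H0. destruct (Nat.eqb_spec x i); auto. subst; contradiction. }
      destruct (Zdivide_dec p (s + n * c i)) as [Hd|Hd].
      * set (v := fun y => if Nat.eqb y i then n else 0%Z).
        assert (Hn : v i = 0%Z).
        { apply (Hg v).
          - intros y _. unfold v. destruct (Nat.eqb y i); lia.
          - unfold zs; simpl. fold (zs c I v).
            rewrite (zs_ext c I v (fun _ => 0%Z)).
            + unfold v. rewrite Nat.eqb_refl.
              assert (zs c I (fun _ => 0%Z) = 0%Z) as Hz.
              { unfold zs. clear. induction I; simpl; auto. }
              rewrite Hz. replace (s + (n * c i + 0))%Z with (s + n * c i)%Z by ring. auto.
            + intros y Hy. unfold v. destruct (Nat.eqb_spec y i); auto. subst; contradiction.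
          - left; auto. }
        unfold v in Hn. rewrite Nat.eqb_refl in Hn. subst n. simpl Z.eqb.
        rewrite Z.mul_0_l, Z.add_0_r in *. destruct (Zdivide_dec p s); [|contradiction].
        replace (ph - IZR 0 * a i) with ph by (simpl; ring). reflexivity.
      * destruct (Z.eqb_spec n 0). 2: reflexivity. subst n.
        rewrite Z.mul_0_l, Z.add_0_r in Hd. destruct (Zdivide_dec p s); [contradiction|reflexivity].
Qed.
Lemma Qred_inject z : Qred (inject_Z z) = inject_Z z.
Proof.
  unfold Qred, inject_Z. pose proof (Z.ggcd_correct_divisors z 1) as H.
  pose proof (Z.ggcd_gcd z 1) as Hg. rewrite Z.gcd_1_r in Hg.
  destruct (Z.ggcd z 1) as [g [x y]]. simpl in Hg. subst g. destruct H as [H1 H2].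
  assert (y = 1%Z) by lia. assert (x = z) by lia. subst x y. simpl. auto.
Qed.

Definition Bad (b : nat) (p : Z) (cm : nat -> Z) (v : nat -> Z) : Prop :=
  (exists i, (i < b)%nat /\ v i <> 0%Z) /\ (p | zsum b (fun i => (v i * cm i)%Z))%Z.

Lemma Bad_ext b p cm v w : (forall i, (i < b)%nat -> v i = w i) -> Bad b p cm v -> Bad b p cm w.
Proof.
  intros H [[i [Hi Hv]] Hd]. split. exists i. rewrite <- H; auto.
  unfold zsum in *. erewrite map_ext_in. exact Hd.
  intros x Hx. apply in_seq in Hx. simpl. rewrite H by lia. reflexivity.
Qed.

Lemma single_nondeg b (p : nat -> Z) (c : nat -> nat -> Z)
  (Hprime : forall m, prime (p m))
  (Hnondeg : forall alpha : nat -> Q,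
      (exists i, (i < b)%nat /\ ~ (alpha i == 0)%Q) ->
      exists M : nat, forall m, (M <= m)%nat -> ~ qsum_zero_mod (p m) b alpha (c m)) :
  forall v, exists M, forall m, (M <= m)%nat -> ~ Bad b (p m) (c m) v.
Proof.
  intros v. destruct (classic (exists i, (i < b)%nat /\ v i <> 0%Z)) as [Hex|Hnex].
  2:{ exists 0%nat. intros m _ [H _]. contradiction. }
  destruct (Hnondeg (fun i => inject_Z (v i))) as [M HM].
  { destruct Hex as [i [Hi Hv]]. exists i. split; auto. intros H. apply Hv.
    apply inject_Z_injective. exact H. }
  exists M. intros m Hm [_ Hd]. apply (HM m Hm). split.
  - intros i _. rewrite Qred_inject. simpl. intros H1.
    pose proof (prime_ge_2 _ (Hprime m)). apply Z.divide_pos_le in H1; lia.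
  - exists v. split.
    + intros i _. rewrite Qred_inject. simpl. rewrite Z.mul_1_r, Z.sub_diag. apply Z.divide_0_r.
    + exact Hd.
Qed.

Lemma combine_M (Q : nat -> Z -> Prop) (lst : list Z) :
  (forall n, In n lst -> exists M, forall m, (M <= m)%nat -> Q m n) ->
  exists M, forall m, (M <= m)%nat -> forall n, In n lst -> Q m n.
Proof.
  induction lst; intros H.
  - exists 0%nat. intros m _ n [].
  - destruct (H a (or_introl eq_refl)) as [M1 H1].
    destruct IHlst as [M2 H2]. intros; apply H; right; auto.
    exists (Nat.max M1 M2). intros m Hm n [Hn|Hn].
    + subst. apply H1. lia.
    + apply H2; auto. lia.
Qed.

Definition Zrange (N : nat) : list Z := map (fun k => (Z.of_nat k - Z.of_nat N)%Z) (seq 0 (2 * N + 1)).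

Lemma in_Zrange N z : (Z.abs z <= Z.of_nat N)%Z -> In z (Zrange N).
Proof.
  intros H. unfold Zrange. apply in_map_iff. exists (Z.to_nat (z + Z.of_nat N)).
  split. rewrite Z2Nat.id by lia. lia. apply in_seq. lia.
Qed.

Lemma fin_nondeg b (p : nat -> Z) (c : nat -> nat -> Z) N
  (Hs : forall v, exists M, forall m, (M <= m)%nat -> ~ Bad b (p m) (c m) v) :
  forall r (w : nat -> Z), exists M, forall m, (M <= m)%nat -> forall v,
    (forall i, (i < r)%nat -> (Z.abs (v i) <= Z.of_nat N)%Z) -> (forall i, (r <= i)%nat -> v i = 0%Z) ->
    ~ Bad b (p m) (c m) (fun i => (v i + w i)%Z).
Proof.
  induction r; intros w.
  - destruct (Hs w) as [M HM]. exists M. intros m Hm v _ Hv HB. apply (HM m Hm).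
    apply (Bad_ext _ _ _ _ _ (fun i _ => f_equal (fun t => (t + w i)%Z) (Hv i (Nat.le_0_l i)))) in HB.
    exact HB.
  - destruct (combine_M (fun m n => forall v,
      (forall i, (i < r)%nat -> (Z.abs (v i) <= Z.of_nat N)%Z) -> (forall i, (r <= i)%nat -> v i = 0%Z) ->
      ~ Bad b (p m) (c m) (fun i => (v i + (w i + if Nat.eqb i r then n else 0))%Z)) (Zrange N)) as [M HM].
    { intros n _. destruct (IHr (fun i => (w i + if Nat.eqb i r then n else 0)%Z)) as [M HM].
      exists M. exact HM. }
    exists M. intros m Hm v Hv1 Hv2 HB.
    apply (HM m Hm (v r) (in_Zrange _ _ (Hv1 r (Nat.lt_succ_diag_r r))) (fun i => if Nat.eqb i r then 0%Z else v i)).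
    + intros i Hi. destruct (Nat.eqb_spec i r). lia. apply Hv1. lia.
    + intros i Hi. destruct (Nat.eqb_spec i r). auto. apply Hv2. lia.
    + revert HB. apply Bad_ext. intros i _. destruct (Nat.eqb_spec i r). subst. lia. lia.
Qed.

Lemma unif_nondeg b (p : nat -> Z) (c : nat -> nat -> Z) N
  (Hprime : forall m, prime (p m))
  (Hnondeg : forall alpha : nat -> Q,
      (exists i, (i < b)%nat /\ ~ (alpha i == 0)%Q) ->
      exists M : nat, forall m, (M <= m)%nat -> ~ qsum_zero_mod (p m) b alpha (c m)) :
  exists M, forall m, (M <= m)%nat -> Hgood N (p m) (c m) 0 (seq 0 b).
Proof.
  destruct (fin_nondeg b p c N (single_nondeg b p c Hprime Hnondeg) b (fun _ => 0%Z)) as [M HM].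
  exists M. intros m Hm v Hv Hd i Hi. apply in_seq in Hi.
  destruct (Z.eq_dec (v i) 0) as [|Hne]; auto. exfalso.
  apply (HM m Hm (fun j => if Nat.ltb j b then v j else 0%Z)).
  - intros j Hj. destruct (Nat.ltb_spec j b). apply Hv. apply in_seq. lia. lia.
  - intros j Hj. destruct (Nat.ltb_spec j b). lia. auto.
  - apply (Bad_ext _ _ _ v). intros j Hj. destruct (Nat.ltb_spec j b). lia. lia.
    split. exists i. split. lia. auto.
    rewrite Z.add_0_l in Hd. exact Hd.
Qed.
Lemma exp_lemma (b : nat) (rho : R) : 0 < rho < 1 ->
  exists N : nat, INR (2 * N + 1) ^ b * rho ^ N < 1.
Proof.
  intros [Hr0 Hr1].
  set (d := / rho - 1).
  assert (Hd : 0 < d). { unfold d. assert (1 < / rho). { rewrite <- Rinv_1. apply Rinv_lt_contravar; lra. } lra. }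
  set (Cs := 2 * (INR b + 1) / d + 1).
  assert (HCs : 1 <= Cs). { unfold Cs. assert (0 <= 2 * (INR b + 1) / d). { apply Rmult_le_pos. pose proof (pos_INR b); lra. left; apply Rinv_0_lt_compat; auto. } lra. }
  set (T := Z.to_nat (up (Cs ^ b / d))).
  assert (HT : Cs ^ b / d < INR T).
  { destruct (archimed (Cs ^ b / d)) as [H1 _].
    assert (0 < Cs ^ b / d). { apply Rdiv_lt_0_compat; auto. apply pow_lt; lra. }
    assert (0 < up (Cs ^ b / d))%Z. { apply lt_IZR. lra. }
    unfold T. rewrite INR_IZR_INZ, Z2Nat.id by lia. lra. }
  exists ((b + 1) * T)%nat.
  assert (H1 : (1 + INR T * d) ^ (b + 1) <= (1 + d) ^ ((b + 1) * T)).
  { rewrite Nat.mul_comm, pow_mult. apply pow_incr. split.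
    pose proof (pos_INR T). nra. apply Rle_pow_lin. lra. }
  assert (H2 : INR (2 * ((b + 1) * T) + 1) <= Cs * (1 + INR T * d)).
  { rewrite plus_INR, !mult_INR, plus_INR. simpl INR.
    unfold Cs. pose proof (pos_INR T). pose proof (pos_INR b).
    assert (2 * (INR b + 1) / d * (INR T * d) = 2 * (INR b + 1) * INR T) by (field; lra).
    assert (0 <= 2 * (INR b + 1) / d) by (apply Rmult_le_pos; [lra| left; apply Rinv_0_lt_compat; auto]).
    nra. }
  assert (H3 : INR (2 * ((b + 1) * T) + 1) ^ b <= Cs ^ b * (1 + INR T * d) ^ b).
  { rewrite <- Rpow_mult_distr. apply pow_incr. split; auto. apply pos_INR. }
  assert (H4 : Cs ^ b < 1 + INR T * d).
  { apply (Rmult_lt_compat_r d) in HT; auto. unfold Rdiv in HT. rewrite Rmult_assoc, Rinv_l in HT by lra. lra. }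
  assert (H5 : 0 < (1 + INR T * d) ^ b). { apply pow_lt. pose proof (pos_INR T). nra. }
  assert (H6 : INR (2 * ((b + 1) * T) + 1) ^ b < (1 + d) ^ ((b + 1) * T)).
  { eapply Rle_lt_trans. exact H3. eapply Rlt_le_trans. 2: exact H1.
    rewrite Nat.add_1_r. simpl pow. nra. }
  assert (H7 : rho ^ ((b + 1) * T) * (1 + d) ^ ((b + 1) * T) = 1).
  { rewrite <- Rpow_mult_distr. unfold d. replace (rho * (1 + (/ rho - 1))) with 1 by (field; lra). apply pow1. }
  assert (0 < rho ^ ((b + 1) * T)) by (apply pow_lt; lra).
  nra.
Qed.

Lemma prod_le (f : nat -> R) B I : (forall i, In i I -> 0 <= f i <= B) ->
  0 <= fold_right (fun i acc => f i * acc) 1 I <= B ^ length I.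
Proof.
  induction I; intros H; simpl. lra.
  destruct (H a (or_introl eq_refl)). destruct IHI. intros; apply H; right; auto.
  split. apply Rmult_le_pos; auto. apply Rmult_le_compat; auto.
Qed.

Lemma prod_bad (f : nat -> R) B B' I : (forall i, In i I -> 0 <= f i <= B) -> 0 <= B' ->
  (exists i, In i I /\ f i <= B') ->
  fold_right (fun i acc => f i * acc) 1 I <= B' * B ^ (length I - 1).
Proof.
  induction I; intros H HB' [i [Hi Hf]]. destruct Hi.
  simpl. rewrite Nat.sub_0_r.
  destruct (prod_le f B I) as [P0 P1]. intros; apply H; right; auto.
  destruct (H a (or_introl eq_refl)) as [Ha0 Ha1].
  destruct Hi as [Hi|Hi].
  - subst. apply Rmult_le_compat; auto.
  - assert (IH : fold_right (fun i acc => f i * acc) 1 I <= B' * B ^ (length I - 1)).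
    { apply IHI; auto. intros; apply H; right; auto. exists i; auto. }
    destruct I as [|x I']. destruct Hi. simpl length in *. rewrite Nat.sub_succ, Nat.sub_0_r in IH.
    simpl pow. assert (0 <= B) by lra.
    apply Rle_trans with (B * (B' * B ^ length I')). apply Rmult_le_compat; auto. lra.
Qed.

Definition ang (u v : R) : R := if Rle_dec 0 v then acos u else - acos u.

Lemma ang_spec u v : u ^ 2 + v ^ 2 = 1 -> cos (ang u v) = u /\ sin (ang u v) = v.
Proof.
  intros H. assert (Hu : -1 <= u <= 1) by nra.
  assert (Hs : sqrt (1 - u²) = Rabs v).
  { replace (1 - u²) with (v ^ 2) by (unfold Rsqr; lra). rewrite <- sqrt_Rsqr_abs. unfold Rsqr. f_equal. ring. }
  unfold ang. destruct (Rle_dec 0 v).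
  - rewrite cos_acos, sin_acos by auto. rewrite Hs, Rabs_right by lra. auto.
  - rewrite cos_neg, sin_neg, cos_acos, sin_acos by auto. rewrite Hs, Rabs_left by lra. split; [auto|ring].
Qed.

Lemma dist_lemma X a eps : 0 < eps -> 1 - eps * eps / 2 < cos (X - a) ->
  Cmod (Cminus (cos X, sin X) (cos a, sin a)) < eps.
Proof.
  intros He Hc. unfold Cmod, Cminus, Cplus, Copp. simpl.
  rewrite cos_minus in Hc.
  assert (Hv : (cos X + - cos a) ^ 2 + (sin X + - sin a) ^ 2 < eps * eps).
  { pose proof (sin2_cos2 X). pose proof (sin2_cos2 a). unfold Rsqr in *. nra. }
  rewrite <- (sqrt_square eps) by lra. apply sqrt_lt_1_alt. split. apply Rplus_le_le_0_compat; apply pow2_ge_0. exact Hv.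
Qed.

Lemma torus_E X : Cmod (cos X, sin X) = 1.
Proof. unfold Cmod. simpl. pose proof (sin2_cos2 X). unfold Rsqr in *. replace (cos X * (cos X * 1) + sin X * (sin X * 1)) with 1 by lra. apply sqrt_1. Qed.
Theorem lemma3p9
  (b : nat) (p : nat -> Z) (c : nat -> nat -> Z)
  (Hprime : forall m, prime (p m))
  (Hinf : forall N : Z, exists M : nat, forall m, (M <= m)%nat -> (N <= p m)%Z)
  (Hnondeg : forall alpha : nat -> Q,
      (exists i, (i < b)%nat /\ ~ (alpha i == 0)%Q) ->
      exists M : nat, forall m, (M <= m)%nat -> ~ qsum_zero_mod (p m) b alpha (c m))
  (U : (Ib b -> C) -> Prop)
  (HUopen : open_in_torus b U) (HUne : exists z, U z)
  (k : nat) (l : Z) (Hk : (0 < k)%nat) (Hl : Z.gcd l (Z.of_nat k) = 1%Z) :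
  forall M : nat, exists m : nat, (M <= m)%nat /\
    exists e : nat, (Z.of_nat e mod Z.of_nat k = l mod Z.of_nat k)%Z /\
      U (fun i : Ib b => Psi (p m) (Z.of_nat e * c m (proj1_sig i))%Z).
Proof.
  intros M0.
  destruct HUne as [z Hz]. destruct HUopen as [Htor Hop].
  destruct (Hop z Hz) as [eps [Heps Hball]].
  assert (Hunit : forall i, fst (z i) ^ 2 + snd (z i) ^ 2 = 1).
  { intros i. pose proof (Htor z Hz i) as H. unfold Cmod in H.
    assert (0 <= fst (z i) ^ 2 + snd (z i) ^ 2) by (apply Rplus_le_le_0_compat; apply pow2_ge_0).
    rewrite <- (sqrt_sqrt (fst (z i) ^ 2 + snd (z i) ^ 2)) by auto. rewrite H. ring. }
  set (g := Rmin (eps * eps / 2) 1).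
  assert (Hg0 : 0 < g). { unfold g. apply Rmin_pos. nra. lra. }
  assert (Hg1 : g <= 1) by (unfold g; apply Rmin_r).
  assert (Hg2 : g <= eps * eps / 2) by (unfold g; apply Rmin_l).
  set (rho := 1 - g / 2).
  destruct (exp_lemma b rho) as [N HN]. unfold rho; lra.
  destruct (unif_nondeg b p c N Hprime Hnondeg) as [M1 HM1].
  destruct (Hinf (Z.of_nat k + 1)%Z) as [M2 HM2].
  set (m := Nat.max M0 (Nat.max M1 M2)).
  exists m. split. unfold m; lia.
  pose proof (Hprime m) as Hpm. pose proof (prime_ge_2 _ Hpm) as Hp2.
  assert (Hpk : ~ (p m | Z.of_nat k)%Z).
  { intros H. apply Z.divide_pos_le in H. specialize (HM2 m ltac:(unfold m; lia)). lia. lia. }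
  assert (Hgood : Hgood N (p m) (c m) 0 (seq 0 b)) by (apply HM1; unfold m; lia).
  set (l' := Z.to_nat (l mod Z.of_nat k)).
  set (a := fun i : nat => match lt_dec i b with
             | left h => ang (fst (z (exist _ i h))) (snd (z (exist _ i h)))
             | right _ => 0 end).
  destruct (IZR_p_pos _ Hpm) as [HP HP0].
  set (P := Z.to_nat (p m)) in *.
  destruct (classic (exists j, (j < P)%nat /\ forall i, (i < b)%nat ->
              cos (yv (p m) (c m) a i (ee l' k j)) > 1 - g)) as [[j [Hj Hgoodj]]|Hbad].
  - exists (ee l' k j). split.
    + unfold ee, l'. rewrite Nat2Z.inj_add, Z2Nat.id by (apply Z.mod_pos_bound; lia).
      rewrite Nat2Z.inj_mul, Z.mul_comm, Z.mod_add by lia. apply Z.mod_mod. lia.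
    + apply Hball.
      * intros i. unfold Psi. apply torus_E.
      * intros [i h]. simpl proj1_sig. unfold Psi.
        specialize (Hgoodj i h). unfold yv in Hgoodj.
        assert (Ha : a i = ang (fst (z (exist _ i h))) (snd (z (exist _ i h)))).
        { unfold a. destruct (lt_dec i b) as [h'|]; [|contradiction].
          rewrite (le_unique _ _ h' h). reflexivity. }
        rewrite Ha in Hgoodj.
        destruct (ang_spec _ _ (Hunit (exist _ i h))) as [Hc Hs].
        destruct (z (exist _ i h)) as [u v] eqn:Ez. simpl in Hc, Hs, Hgoodj.
        replace (u, v) with (cos (ang u v), sin (ang u v)) by (rewrite Hc, Hs; reflexivity). apply dist_lemma; auto. lra.
  - exfalso.
    assert (Hb : forall j, (j < P)%nat -> exists i, (i < b)%nat /\
               cos (yv (p m) (c m) a i (ee l' k j)) <= 1 - g).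
    { intros j Hj. apply NNPP. intros Hn. apply Hbad. exists j. split; auto.
      intros i Hi. apply Rnot_le_gt. intros Hle. apply Hn. exists i. auto. }
    pose proof (A_main N (p m) l' k (c m) a (seq 0 b) Hpm Hpk (seq_NoDup b 0) 0%Z 0 Hgood) as HA.
    destruct (Zdivide_dec (p m) 0) as [_|Hn0]. 2:{ exfalso. apply Hn0. apply Z.divide_0_r. }
    unfold A in HA.
    rewrite (csum_ext _ _ (fun j => RtoC (prodR N (p m) (c m) a (seq 0 b) (ee l' k j)))) in HA.
    2:{ intros j _. unfold Achar. rewrite Z.mul_0_r. replace (2 * PI * IZR 0 / IZR (p m) + 0) with 0.
        rewrite E_0, prodC_R. ring. simpl. field. apply not_0_IZR. lia. }
    rewrite csum_RtoC, E_0, length_seq, <- !RtoC_mult in HA. apply RtoC_inj in HA.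
    assert (Hup : rsum (seq 0 P) (fun j => prodR N (p m) (c m) a (seq 0 b) (ee l' k j))
                  <= rsum (seq 0 P) (fun _ => (2 - g) ^ N * (2 ^ N) ^ (b - 1))).
    { apply rsum_le. intros j Hj. apply in_seq in Hj. unfold prodR.
      rewrite <- (length_seq b 0) at 2.
      apply prod_bad.
      - intros i _. split. apply K_nonneg. apply K_le.
      - apply pow_le. lra.
      - destruct (Hb j ltac:(lia)) as [i [Hi Hc]]. exists i. split. apply in_seq; lia.
        unfold K. apply pow_incr. pose proof (COS_bound (yv (p m) (c m) a i (ee l' k j))). lra. }
    change (Z.to_nat (p m)) with P in HA. rewrite HA, rsum_const, length_seq in Hup.
    assert (HPpos : 0 < INR P) by (apply lt_0_INR; lia).
    assert (Hq : q0 N ^ b * 1 <= (2 - g) ^ N * (2 ^ N) ^ (b - 1)).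
    { apply (Rmult_le_reg_l (INR P)); auto. lra. }
    destruct b as [|b'].
    { destruct (Hb 0%nat HP0) as [i [Hi _]]. lia. }
    simpl (S b' - 1)%nat in Hq. rewrite Nat.sub_0_r in Hq.
    pose proof (q0_lower N) as Hq0.
    set (X := 2 ^ N) in *. set (Qn := INR (2 * N + 1)) in *.
    assert (HX : 0 < X) by (unfold X; apply pow_lt; lra).
    assert (HQn : 0 < Qn) by (unfold Qn; apply lt_0_INR; lia).
    assert (HY : 0 < X ^ b') by (apply pow_lt; auto).
    assert (Hq0p : 0 <= q0 N). { assert (0 < Qn * q0 N) by lra. nra. }
    assert (H1 : X ^ S b' <= (Qn * q0 N) ^ S b') by (apply pow_incr; lra).
    rewrite Rpow_mult_distr in H1.
    assert (H2 : (2 - g) ^ N = X * rho ^ N). { unfold X, rho. rewrite <- Rpow_mult_distr. f_equal. field. }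
    rewrite H2 in Hq.
    assert (H3 : 0 < Qn ^ S b') by (apply pow_lt; auto).
    assert (H4 : X ^ S b' <= Qn ^ S b' * (X * rho ^ N * X ^ b')).
    { eapply Rle_trans. exact H1. apply Rmult_le_compat_l. lra. lra. }
    simpl pow in H4. 
    assert (H5 : X * X ^ b' * 1 <= X * X ^ b' * (Qn ^ S b' * rho ^ N)).
    { simpl pow. nra. }
    apply Rmult_le_reg_l in H5. 2: nra.
    lra.
Qed.
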